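(* Let $\operatorname{R}_4=\{a_0,a_1,a_2,a_3\}$ be the dihedral quandle of order $4$, with $a_ia_j=a_{2j-i \pmod 4}$. Then the quandle ring $\mathbb{Z}[\operatorname{R}_4]$ contains a unique maximal quandle, namely $$M=\Big\{t\big(a_0+\alpha(a_2-a_0)\big)+(1-t)\big(a_1+\beta(a_3-a_1)\big)~|~t\in\{0,1\},~\alpha,\beta\in\mathbb{Z}\Big\}.$$
   Context: A quandle is a non-empty set with a binary operation $(x,y)\mapsto xy$ such that $xx=x$; for all $x,y$ there is a unique $z$ with $x=zy$; and $(xy)z=(xz)(yz)$. For a quandle $Q$, the quandle ring $\mathbb{Z}[Q]$ is the free abelian group with basis $Q$, with multiplication $\big(\sum_i\alpha_i q_i\big)\big(\sum_j\beta_j q_j\big)=\sum_{i,j}\alpha_i\beta_j (q_iq_j)$. A quandle in $\mathbb{Z}[Q]$ is a subset closed under the ring multiplication which is a quandle under the restricted multiplication; a maximal quandle is a non-zero quandle in $\mathbb{Z}[Q]$ (i.e. not equal to $\{0\}$) not properly contained in any other quandle in $\mathbb{Z}[Q]$. *)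

(* Defs.v *)
From mathcomp Require Import all_boot all_order all_algebra.
Set Implicit Arguments. Unset Strict Implicit. Unset Printing Implicit Defensive.
Import Order.TTheory GRing.Theory Num.Theory.
Local Open Scope ring_scope.

Definition r4op (i j : 'I_4) : 'I_4 := inord ((2 * j + 4 - i) %% 4)%N.

(* The quandle ring Z[Q] of a finite quandle (Q, op): elements are integer
   coefficient vectors, i.e. functions Q -> int (finitely supported since Q finite). *)
Definition qring (Q : finType) := {ffun Q -> int}.

Definition qmul (Q : finType) (op : Q -> Q -> Q) (u v : qring Q) : qring Q :=
  [ffun k => \sum_(i : Q) \sum_(j : Q | op i j == k) u i * v j].

Definition basis (Q : finType) (q : Q) : qring Q := [ffun k => ((k == q) : nat)%:Z].

Definition is_quandle_in (Q : finType) (op : Q -> Q -> Q) (S : qring Q -> Prop) : Prop :=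
  [/\ (exists x, S x),
      (forall x y, S x -> S y -> S (qmul op x y)),
      (forall x, S x -> qmul op x x = x),
      (forall x y, S x -> S y -> exists! z, S z /\ x = qmul op z y) &
      (forall x y z, S x -> S y -> S z ->
         qmul op (qmul op x y) z = qmul op (qmul op x z) (qmul op y z))].

Definition is_maximal_quandle (Q : finType) (op : Q -> Q -> Q) (S : qring Q -> Prop) : Prop :=
  [/\ is_quandle_in op S,
      ~ (forall x, S x <-> x = 0) &
      (forall T, is_quandle_in op T -> (forall x, S x -> T x) -> (forall x, T x -> S x))].

Definition a (i : 'I_4) : qring 'I_4 := basis i.

Definition M4 : qring 'I_4 -> Prop := fun x =>
  exists (t : int) (alpha beta : int), (t = 0 \/ t = 1) /\
    x = (a (inord 0) + (a (inord 2) - a (inord 0)) *~ alpha) *~ t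
        + (a (inord 1) + (a (inord 3) - a (inord 1)) *~ beta) *~ (1 - t).

(* Main.v *)
Require Import Defs.
From mathcomp Require Import all_boot all_order all_algebra.
From mathcomp Require Import zify ring lra.
Set Implicit Arguments. Unset Strict Implicit. Unset Printing Implicit Defensive.
Import Order.TTheory GRing.Theory Num.Theory.
Local Open Scope ring_scope.

Definition mk (c0 c1 c2 c3 : int) : qring 'I_4 :=
  [ffun k : 'I_4 => nth 0 [:: c0; c1; c2; c3] k].

Lemma mkE (x : qring 'I_4) :
  x = mk (x (inord 0)) (x (inord 1)) (x (inord 2)) (x (inord 3)).
Proof.
apply/ffunP => -[[|[|[|[|k]]]] Hk] //; rewrite ffunE /=; congr (x _); apply/val_inj;
  by rewrite /= inordK.
Qed.

Lemma mk_inj a0 a1 a2 a3 b0 b1 b2 b3 :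
  mk a0 a1 a2 a3 = mk b0 b1 b2 b3 -> [/\ a0 = b0, a1 = b1, a2 = b2 & a3 = b3].
Proof.
move=> /ffunP H.
have := H (inord 0); have := H (inord 1); have := H (inord 2); have := H (inord 3).
by rewrite !ffunE !inordK.
Qed.

Lemma mkD a0 a1 a2 a3 b0 b1 b2 b3 :
  mk a0 a1 a2 a3 + mk b0 b1 b2 b3 = mk (a0+b0) (a1+b1) (a2+b2) (a3+b3).
Proof. by apply/ffunP => -[[|[|[|[|k]]]] Hk]; rewrite !ffunE. Qed.

Lemma mkN a0 a1 a2 a3 : - mk a0 a1 a2 a3 = mk (-a0) (-a1) (-a2) (-a3).
Proof. by apply/ffunP => -[[|[|[|[|k]]]] Hk]; rewrite !ffunE. Qed.

Lemma mkZ a0 a1 a2 a3 n : mk a0 a1 a2 a3 *~ n = mk (a0*n) (a1*n) (a2*n) (a3*n).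
Proof. apply/ffunP => -[[|[|[|[|k]]]] Hk]; rewrite ffunMzE !ffunE /= ?mulrzz //; by rewrite nth_nil mul0rz. Qed.

Lemma aE0 : a (inord 0) = mk 1 0 0 0.
Proof. apply/ffunP => -[[|[|[|[|k]]]] Hk] //; rewrite !ffunE /= -val_eqE /= inordK //. Qed.
Lemma aE1 : a (inord 1) = mk 0 1 0 0.
Proof. apply/ffunP => -[[|[|[|[|k]]]] Hk] //; rewrite !ffunE /= -val_eqE /= inordK //. Qed.
Lemma aE2 : a (inord 2) = mk 0 0 1 0.
Proof. apply/ffunP => -[[|[|[|[|k]]]] Hk] //; rewrite !ffunE /= -val_eqE /= inordK //. Qed.
Lemma aE3 : a (inord 3) = mk 0 0 0 1.
Proof. apply/ffunP => -[[|[|[|[|k]]]] Hk] //; rewrite !ffunE /= -val_eqE /= inordK //. Qed.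

Lemma r4opE (i j : 'I_4) : val (r4op i j) = ((2 * j + 4 - i) %% 4)%N.
Proof. by rewrite /r4op /= inordK // ltn_pmod. Qed.

Lemma qmulE a0 a1 a2 a3 b0 b1 b2 b3 :
  qmul r4op (mk a0 a1 a2 a3) (mk b0 b1 b2 b3) =
  mk (a0*(b0+b2) + a2*(b1+b3)) (a1*(b1+b3) + a3*(b0+b2))
     (a2*(b0+b2) + a0*(b1+b3)) (a3*(b1+b3) + a1*(b0+b2)).
Proof.
apply/ffunP => -[[|[|[|[|k]]]] Hk]; rewrite !ffunE //;
  under eq_bigr do rewrite big_mkcond /=;
  rewrite !big_ord_recl !big_ord0 /= !ffunE -!val_eqE !r4opE /=; ring.
Qed.

Definition PM (c0 c1 c2 c3 : int) : Prop :=
  (c0 + c2 = 1 /\ c1 = 0 /\ c3 = 0) \/ (c0 = 0 /\ c2 = 0 /\ c1 + c3 = 1).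

Lemma M4_mk c0 c1 c2 c3 : M4 (mk c0 c1 c2 c3) <-> PM c0 c1 c2 c3.
Proof.
split.
- move=> [t [al [be [Ht]]]].
  rewrite aE0 aE1 aE2 aE3 !(mkN, mkD, mkZ) => /mk_inj [-> -> -> ->].
  rewrite /PM; case: Ht => ->; [right|left]; lia.
- case=> [[H1 [H2 H3]]|[H1 [H2 H3]]].
  + exists 1, c2, 0; split; first by right.
    rewrite aE0 aE1 aE2 aE3 !(mkN, mkD, mkZ); congr mk; lia.
  + exists 0, 0, c3; split; first by left.
    rewrite aE0 aE1 aE2 aE3 !(mkN, mkD, mkZ); congr mk; lia.
Qed.

Lemma mk0 : (0 : qring 'I_4) = mk 0 0 0 0.
Proof. by apply/ffunP => -[[|[|[|[|k]]]] Hk]; rewrite !ffunE. Qed.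

Lemma idem_PM c0 c1 c2 c3 :
  qmul r4op (mk c0 c1 c2 c3) (mk c0 c1 c2 c3) = mk c0 c1 c2 c3 ->
  (c0 = 0 /\ c1 = 0 /\ c2 = 0 /\ c3 = 0) \/ PM c0 c1 c2 c3.
Proof.
rewrite qmulE => /mk_inj [e0 e1 e2 e3].
have hE : (c0 + c2) * ((c0 + c2) + (c1 + c3) - 1) = 0 by nia.
have hO : (c1 + c3) * ((c0 + c2) + (c1 + c3) - 1) = 0 by nia.
set E := c0 + c2 in e0 e1 e2 e3 hE hO *; set O := c1 + c3 in e0 e1 e2 e3 hE hO *.
have [EO|EO] := eqVneq (E + O - 1) 0; last first.
  move/eqP: hO; move/eqP: hE; rewrite !mulf_eq0 (negbTE EO) !orbF => /eqP Ez /eqP Oz.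
  left; rewrite Ez Oz in e0 e1 e2 e3; rewrite /E in Ez; rewrite /O in Oz; lia.
have hO2 : O * (c0 - c2) = 0.
  have -> : O * (c0 - c2) = c0 * (E + O - 1) - (c0 * E + c2 * O - c0) by ring.
  by rewrite EO e0 mulr0 subrr subr0.
have hE2 : E * (c1 - c3) = 0.
  have -> : E * (c1 - c3) = c1 * (E + O - 1) - (c1 * O + c3 * E - c1) by ring.
  by rewrite EO e1 mulr0 subrr subr0.
right; rewrite /PM.
have [Oz|Onz] := eqVneq O 0.
  left. rewrite Oz in e1 e3 EO. rewrite /O in Oz. rewrite /E in EO. lia.
have [Ez|Enz] := eqVneq E 0.
  right. rewrite Ez in e0 e2 EO. rewrite /E in Ez. rewrite /O in EO. lia.
move/eqP: hE2; move/eqP: hO2; rewrite !mulf_eq0 (negbTE Onz) (negbTE Enz) /= => /eqP h1 /eqP h2.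
rewrite /E /O in EO; lia.
Qed.

Lemma M4_form x : M4 x ->
  (exists al, x = mk (1 - al) 0 al 0) \/ (exists be, x = mk 0 (1 - be) 0 be).
Proof.
rewrite (mkE x) M4_mk => -[[H1 [-> ->]]|[-> [-> H3]]].
- left; exists (x (inord 2)); congr mk; lia.
- right; exists (x (inord 3)); congr mk; lia.
Qed.

Lemma M4_al al : M4 (mk (1 - al) 0 al 0).
Proof. apply/M4_mk; left; split; [ring | by []]. Qed.
Lemma M4_be be : M4 (mk 0 (1 - be) 0 be).
Proof. apply/M4_mk; right; split; [by [] | split; [by [] | ring]]. Qed.

Lemma M4_mul x y : M4 x -> M4 y -> M4 (qmul r4op x y).
Proof.
move=> /M4_form [[a1 ->]|[b1 ->]] /M4_form [[a2 ->]|[b2 ->]]; rewrite qmulE.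
- have -> : mk ((1 - a1) * (1 - a2 + a2) + a1 * (0 + 0)) (0 * (0 + 0) + 0 * (1 - a2 + a2))
    (a1 * (1 - a2 + a2) + (1 - a1) * (0 + 0)) (0 * (0 + 0) + 0 * (1 - a2 + a2)) = mk (1 - a1) 0 a1 0.
    by congr mk; ring.
  exact: M4_al.
- have -> : mk ((1 - a1) * (0 + 0) + a1 * (1 - b2 + b2)) (0 * (1 - b2 + b2) + 0 * (0 + 0))
    (a1 * (0 + 0) + (1 - a1) * (1 - b2 + b2)) (0 * (1 - b2 + b2) + 0 * (0 + 0)) = mk (1 - (1 - a1)) 0 (1 - a1) 0.
    by congr mk; ring.
  exact: M4_al.
- have -> : mk (0 * (1 - a2 + a2) + 0 * (0 + 0)) ((1 - b1) * (0 + 0) + b1 * (1 - a2 + a2))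
    (0 * (1 - a2 + a2) + 0 * (0 + 0)) (b1 * (0 + 0) + (1 - b1) * (1 - a2 + a2)) = mk 0 (1 - (1 - b1)) 0 (1 - b1).
    by congr mk; ring.
  exact: M4_be.
- have -> : mk (0 * (0 + 0) + 0 * (1 - b2 + b2)) ((1 - b1) * (1 - b2 + b2) + b1 * (0 + 0))
    (0 * (0 + 0) + 0 * (1 - b2 + b2)) (b1 * (1 - b2 + b2) + (1 - b1) * (0 + 0)) = mk 0 (1 - b1) 0 b1.
    by congr mk; ring.
  exact: M4_be.
Qed.

Lemma M4_idem x : M4 x -> qmul r4op x x = x.
Proof. by move=> /M4_form [[a1 ->]|[b1 ->]]; rewrite qmulE; congr mk; ring. Qed.

Lemma M4_inv2 z y : M4 y -> qmul r4op (qmul r4op z y) y = z.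
Proof.
move=> /M4_form [[a1 ->]|[b1 ->]]; rewrite (mkE z) !qmulE; congr mk; ring.
Qed.

Lemma M4_sd x y z : M4 y -> M4 z ->
  qmul r4op (qmul r4op x y) z = qmul r4op (qmul r4op x z) (qmul r4op y z).
Proof.
move=> /M4_form [[a1 ->]|[b1 ->]] /M4_form [[a2 ->]|[b2 ->]]; rewrite (mkE x) !qmulE;
  congr mk; ring.
Qed.

Lemma M4_quandle : is_quandle_in r4op M4.
Proof.
split.
- by exists (mk (1 - 0) 0 0 0); apply: M4_al.
- exact: M4_mul.
- exact: M4_idem.
- move=> x y Mx My; exists (qmul r4op x y); split.
  + by split; [apply: M4_mul | rewrite M4_inv2].
  + by move=> z' [_ ->]; rewrite M4_inv2.
- by move=> x y z _ My Mz; apply: M4_sd.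
Qed.

Lemma idem x : qmul r4op x x = x -> x = 0 \/ M4 x.
Proof.
rewrite (mkE x) => /idem_PM [[-> [-> [-> ->]]]|H].
- by left; rewrite mk0.
- by right; apply/M4_mk.
Qed.

Lemma M4_neq0 x : M4 x -> x <> 0.
Proof.
rewrite (mkE x) M4_mk mk0 => H /mk_inj [e0 e1 e2 e3].
move: H; rewrite /PM e0 e1 e2 e3; lia.
Qed.

Lemma qmul0 z : qmul r4op z 0 = 0.
Proof. by rewrite (mkE z) mk0 qmulE; congr mk; ring. Qed.

Lemma quandle_sub S : is_quandle_in r4op S -> ~ (forall x, S x <-> x = 0) ->
  forall x, S x -> M4 x.
Proof.
move=> [_ _ Hid Hdiv _] Hn x Sx.
case: (idem (Hid x Sx)) => // x0.
exfalso; apply: Hn => y; split; last by move=> ->; rewrite -x0.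
move=> Sy; have [z [[_ ->] _]] := Hdiv y x Sy Sx.
by rewrite x0 qmul0.
Qed.

Theorem theorem5p3 :
  is_maximal_quandle r4op M4 /\
  (forall S : qring 'I_4 -> Prop, is_maximal_quandle r4op S -> forall x, S x <-> M4 x).
Proof.
split.
- split; first exact: M4_quandle.
  + move=> H; have M0 := M4_al 0; exact: M4_neq0 M0 (proj1 (H _) M0).
  + move=> T HT sub x Tx.
    have NZ : ~ (forall y, T y <-> y = 0).
      move=> H; have M0 := M4_al 0; exact: M4_neq0 M0 (proj1 (H _) (sub _ M0)).
    exact: (quandle_sub HT NZ Tx).
- move=> S [HS Hn Hmax] x; split; first exact: quandle_sub.
  by apply: Hmax M4_quandle _ _; apply: quandle_sub.
Qed.
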